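(* Let $F(z,\zeta,\bar z,\bar\zeta)$ be real-analytic near $0$ with $F_{z\bar z}\neq0$ and $F_{z\bar z}F_{\zeta\bar\zeta}-F_{\zeta\bar z}F_{z\bar\zeta}\equiv0$. For every multiindex $(a,b,c,d)\in\mathbb{N}^4$ with $b\geq1$ and $d\geq1$, setting $n:=a+b+c+d$, there exist a polynomial $P_{a,b,c,d}$ (not depending on $F$) and an integer $N_{a,b,c,d}\geq1$ such that $$F_{z^a\zeta^b\bar z^c\bar\zeta^d}\equiv\frac{1}{(F_{z\bar z})^{N_{a,b,c,d}}}\,P_{a,b,c,d}\Big(\{F_{z^{a'}\bar z^{c'}}\}_{a'+c'\leq n},\ \{F_{z^{a'}\zeta^{b'}\bar z^{c'}}\}_{a'+b'+c'\leq n},\ \{F_{z^{a'}\bar z^{c'}\bar\zeta^{d'}}\}_{a'+c'+d'\leq n}\Big).$$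
   Context: Subscripts denote partial derivatives, e.g. $F_{z^a\zeta^b\bar z^c\bar\zeta^d}=\partial_z^a\partial_\zeta^b\partial_{\bar z}^c\partial_{\bar\zeta}^dF$. *)

(* Defs.v *)
From HB Require Import structures.
From mathcomp Require Import all_boot all_order all_algebra.
From mathcomp Require Import complex.
From mathcomp Require Import Rstruct.
Set Implicit Arguments.
Unset Strict Implicit.
Unset Printing Implicit Defensive.
Import Order.TTheory GRing.Theory Num.Theory.
Local Open Scope ring_scope.

Definition CC : fieldType := (Rdefinitions.R)[i].

(* A (formal) power series in the four independent variables
   (z, zeta, zbar, zetabar): F i j k l is the coefficient of
   z^i zeta^j zbar^k zetabar^l. A real-analytic function near 0 on C^2
   is exactly a convergent such series (see [ps_convergent]). *)
Definition ps := nat -> nat -> nat -> nat -> CC.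

Definition ps_convergent (F : ps) : Prop :=
  exists M : Rdefinitions.R, 0 < M /\
    forall i j k l : nat,
      Normc.normc (F i j k l : (Rdefinitions.R)[i]) <= M ^+ (i + j + k + l).

Definition ps_const (c : CC) : ps :=
  fun i j k l => if [&& i == 0%N, j == 0%N, k == 0%N & l == 0%N] then c else 0.
Definition ps_add (F G : ps) : ps := fun i j k l => F i j k l + G i j k l.
Definition ps_mul (F G : ps) : ps := fun i j k l =>
  \sum_(i1 < i.+1) \sum_(j1 < j.+1) \sum_(k1 < k.+1) \sum_(l1 < l.+1)
     F i1 j1 k1 l1 * G (i - i1)%N (j - j1)%N (k - k1)%N (l - l1)%N.
Definition ps_pow (F : ps) (n : nat) : ps := iter n (ps_mul F) (ps_const 1).

(* Partial derivatives: d/dz, d/dzeta, d/dzbar, d/dzetabar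
   (z, zeta, zbar, zetabar treated as independent variables, i.e.
   Wirtinger derivatives of the real-analytic function). *)
Definition dz (F : ps) : ps := fun i j k l => i.+1%:R * F i.+1 j k l.
Definition dzeta (F : ps) : ps := fun i j k l => j.+1%:R * F i j.+1 k l.
Definition dzb (F : ps) : ps := fun i j k l => k.+1%:R * F i j k.+1 l.
Definition dzetab (F : ps) : ps := fun i j k l => l.+1%:R * F i j k l.+1.

Definition pderiv (a b c d : nat) (F : ps) : ps :=
  iter a dz (iter b dzeta (iter c dzb (iter d dzetab F))).

Definition ps_at0 (F : ps) : CC := F 0%N 0%N 0%N 0%N.

Inductive dvar : Type :=
  | VarA of nat & nat
  | VarB of nat & nat & nat
  | VarC of nat & nat & nat.

Definition dvar_ok (n : nat) (v : dvar) : bool :=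
  match v with
  | VarA a' c' => (a' + c' <= n)%N
  | VarB a' b' c' => (a' + b' + c' <= n)%N
  | VarC a' c' d' => (a' + c' + d' <= n)%N
  end.

Definition dvar_eval (F : ps) (v : dvar) : ps :=
  match v with
  | VarA a' c' => pderiv a' 0 c' 0 F
  | VarB a' b' c' => pderiv a' b' c' 0 F
  | VarC a' c' d' => pderiv a' 0 c' d' F
  end.

Inductive polyexpr : Type :=
  | PConst of CC
  | PVar of dvar
  | PAdd of polyexpr & polyexpr
  | PMul of polyexpr & polyexpr.

Fixpoint pvars_ok (n : nat) (P : polyexpr) : bool :=
  match P with
  | PConst _ => true
  | PVar v => dvar_ok n v
  | PAdd P1 P2 => pvars_ok n P1 && pvars_ok n P2
  | PMul P1 P2 => pvars_ok n P1 && pvars_ok n P2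
  end.

Fixpoint peval (F : ps) (P : polyexpr) : ps :=
  match P with
  | PConst c => ps_const c
  | PVar v => dvar_eval F v
  | PAdd P1 P2 => ps_add (peval F P1) (peval F P2)
  | PMul P1 P2 => ps_mul (peval F P1) (peval F P2)
  end.

(* Main.v *)
Require Import Defs.
From HB Require Import structures.
From mathcomp Require Import all_boot all_order all_algebra.
From mathcomp Require Import complex Rstruct.
From mathcomp Require Import boolp.
From mathcomp Require Import ring zify.
Import Order.TTheory GRing.Theory Num.Theory.
Local Open Scope ring_scope.
Set Implicit Arguments.
Unset Strict Implicit.

Definition fs (R : Type) := nat -> R.

Section FS.
Variable R : comNzRingType.
HB.instance Definition _ := Choice.copy (fs R) (nat -> R).

Definition fs_zero : fs R := fun _ => 0.
Definition fs_add (F G : fs R) : fs R := fun i => F i + G i.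
Definition fs_opp (F : fs R) : fs R := fun i => - F i.
Definition fs_one : fs R := fun i => if i == 0%N then 1 else 0.
Definition fs_mul (F G : fs R) : fs R := fun n => \sum_(j < n.+1) F j * G (n - j)%N.

Lemma fs_addA : associative fs_add.
Proof. by move=> F G H; apply: funext => i; rewrite /fs_add addrA. Qed.
Lemma fs_addC : commutative fs_add.
Proof. by move=> F G; apply: funext => i; rewrite /fs_add addrC. Qed.
Lemma fs_add0 : left_id fs_zero fs_add.
Proof. by move=> F; apply: funext => i; rewrite /fs_add /fs_zero add0r. Qed.
Lemma fs_addN : left_inverse fs_zero fs_opp fs_add.
Proof. by move=> F; apply: funext => i; rewrite /fs_add /fs_opp addNr. Qed.

HB.instance Definition _ := GRing.isZmodule.Build (fs R) fs_addA fs_addC fs_add0 fs_addN.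

Definition tr (n : nat) (F : fs R) : {poly R} := \poly_(i < n.+1) F i.

Lemma tr_coef n F i : (i <= n)%N -> (tr n F)`_i = F i.
Proof. by move=> h; rewrite /tr coef_poly ltnS h. Qed.

Lemma fs_mul_poly (p q : {poly R}) F G n :
  (forall i, (i <= n)%N -> F i = p`_i) -> (forall i, (i <= n)%N -> G i = q`_i) ->
  fs_mul F G n = (p * q)`_n.
Proof.
move=> hF hG; rewrite coefM /fs_mul; apply: eq_bigr => j _.
have hj := ltn_ord j.
by rewrite hF ?hG ?leq_subr // -ltnS.
Qed.

Lemma fs_mulE_tr m F G n : (n <= m)%N -> fs_mul F G n = (tr m F * tr m G)`_n.
Proof.
move=> hn; apply: fs_mul_poly => i hi; rewrite tr_coef //; exact: leq_trans hn.
Qed.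

Lemma fs_mulA : associative fs_mul.
Proof.
move=> F G H; apply: funext => n.
have hT (K : fs R) : forall i, (i <= n)%N -> K i = (tr n K)`_i.
  by move=> i hi; rewrite tr_coef.
have hM (K L : fs R) : forall i, (i <= n)%N -> fs_mul K L i = (tr n K * tr n L)`_i.
  by move=> i hi; rewrite (fs_mulE_tr (m:=n)).
rewrite (fs_mul_poly (hM F G) (hT H)) (fs_mul_poly (hT F) (hM G H)).
by rewrite mulrA.
Qed.

Lemma fs_mulC : commutative fs_mul.
Proof.
move=> F G; apply: funext => n.
by rewrite (fs_mulE_tr (m:=n)) // (fs_mulE_tr (m:=n)) // mulrC.
Qed.

Lemma tr_one n : tr n fs_one = 1.
Proof.
apply/polyP => i; rewrite /tr coef_poly coef1 /fs_one.
case: i => [|i] /=; first by []. 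
by case: ifP.
Qed.

Lemma fs_mul1 : left_id fs_one fs_mul.
Proof.
move=> F; apply: funext => n.
by rewrite (fs_mulE_tr (m:=n)) // tr_one mul1r tr_coef.
Qed.

Lemma tr_add n F G : tr n (fs_add F G) = tr n F + tr n G.
Proof. by apply/polyP => i; rewrite coefD /tr !coef_poly; case: ifP; rewrite ?addr0. Qed.

Lemma fs_mulDl : left_distributive fs_mul fs_add.
Proof.
move=> F G H; apply: funext => n.
rewrite /fs_add (fs_mulE_tr (m:=n)) // (fs_mulE_tr (m:=n)) // (fs_mulE_tr (m:=n)) //.
by rewrite tr_add mulrDl coefD.
Qed.

Lemma fs_one_neq0 : fs_one != 0.
Proof.
apply/eqP => h; have := congr1 (fun f : fs R => f 0%N) h.
rewrite /fs_one /=; move/eqP; rewrite oner_eq0 //.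
Qed.

HB.instance Definition _ := GRing.Zmodule_isComNzRing.Build (fs R)
  fs_mulA fs_mulC fs_mul1 fs_mulDl fs_one_neq0.

Lemma fs_mulE (F G : fs R) n : (F * G) n = \sum_(j < n.+1) F j * G (n - j)%N.
Proof. by []. Qed.
Lemma fs_addE (F G : fs R) n : (F + G) n = F n + G n.
Proof. by []. Qed.
Lemma fs_oppE (F : fs R) n : (- F) n = - F n.
Proof. by []. Qed.
Lemma fs_zeroE n : (0 : fs R) n = 0.
Proof. by []. Qed.
Lemma fs_oneE n : (1 : fs R) n = if n == 0%N then 1 else 0.
Proof. by []. Qed.
Lemma fs_natmulE (F : fs R) m n : (F *+ m) n = F n *+ m.
Proof. by elim: m => [|m IH]; rewrite ?mulr0n // !mulrS fs_addE IH. Qed.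
Lemma fs_sumE I (r : seq I) (P : pred I) (f : I -> fs R) n :
  (\sum_(i <- r | P i) f i) n = \sum_(i <- r | P i) f i n.
Proof. by elim/big_rec2: _ => // i x y _ <-. Qed.

Definition dfs (F : fs R) : fs R := fun i => F i.+1 *+ i.+1.

Lemma dfs_add (F G : fs R) : dfs (F + G) = dfs F + dfs G.
Proof. by apply: funext => i; rewrite /dfs fs_addE mulrnDl. Qed.

Lemma tr_dfs n F i : (i <= n)%N -> (tr n.+1 F)^`()`_i = dfs F i.
Proof. by move=> h; rewrite coef_deriv tr_coef. Qed.

Lemma dfs_mul (F G : fs R) : dfs (F * G) = dfs F * G + F * dfs G.
Proof.
apply: funext => n; rewrite fs_addE.
rewrite /dfs [X in X *+ _](fs_mulE_tr (m:=n.+1)) // -coef_deriv derivM coefD.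
congr (_ + _); symmetry; apply: fs_mul_poly => i hi.
- by rewrite tr_dfs.
- by rewrite tr_coef //; apply: leq_trans hi _.
- by rewrite tr_coef //; apply: leq_trans hi _.
- by rewrite tr_dfs.
Qed.

End FS.

Definition isder (R : comNzRingType) (δ : R -> R) :=
  (forall x y, δ (x + y) = δ x + δ y) /\ (forall x y, δ (x * y) = δ x * y + x * δ y).

Section Der.
Variable R : comNzRingType.
Variable δ : R -> R.
Hypothesis hd : isder δ.

Lemma der0 : δ 0 = 0.
Proof.
have h := hd.1 0 0; rewrite addr0 in h.
have := congr1 (fun z => z - δ 0) h; rewrite /= subrr addrK => <-. by [].
Qed.

Lemma derN x : δ (- x) = - δ x.
Proof.
have h := hd.1 x (- x); rewrite subrr der0 in h.
by apply/eqP; rewrite -addr_eq0 addrC -h.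
Qed.

Lemma der_sum I (r : seq I) (P : pred I) (f : I -> R) :
  δ (\sum_(i <- r | P i) f i) = \sum_(i <- r | P i) δ (f i).
Proof. by elim/big_rec2: _ => [|i x y _ <-]; rewrite ?der0 // hd.1. Qed.

Lemma der_exp x n : δ (x ^+ n.+1) = x ^+ n * δ x *+ n.+1.
Proof.
elim: n => [|n IH]; first by rewrite expr1 expr0 mul1r.
rewrite exprS hd.2 IH (mulrS _ n.+1) mulrnAr mulrA -exprS; congr (_ + _).
by rewrite mulrC.
Qed.

Definition liftd (F : fs R) : fs R := fun i => δ (F i).

Lemma liftd_der : isder liftd.
Proof.
split=> x y; apply: funext => n; rewrite /liftd ?fs_addE ?hd.1 //.
rewrite !fs_mulE der_sum -big_split; apply: eq_bigr => i _; by rewrite hd.2.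
Qed.
End Der.

Lemma dfs_der (R : comNzRingType) : isder (@dfs R).
Proof. split; [exact: dfs_add | exact: dfs_mul]. Qed.

Definition T1 := fs CC.
Definition T2 := fs T1.
Definition T3 := fs T2.
Definition T4 := fs T3.

Lemma funext4 (X Y : ps) : (forall i j k l, X i j k l = Y i j k l) -> X = Y.
Proof.
move=> h; apply: funext => i; apply: funext => j; apply: funext => k; apply: funext => l.
exact: h.
Qed.

Lemma ps_addE (X Y : ps) : ps_add X Y = (X : T4) + Y.
Proof. by apply: funext4. Qed.

Lemma ps_mulE (X Y : ps) : ps_mul X Y = (X : T4) * Y.
Proof.
apply: funext4 => i j k l; rewrite fs_mulE fs_sumE fs_sumE fs_sumE.
apply: eq_bigr => i1 _; rewrite fs_mulE fs_sumE fs_sumE.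
apply: eq_bigr => j1 _; rewrite fs_mulE fs_sumE.
apply: eq_bigr => k1 _; rewrite fs_mulE.
by [].
Qed.

Lemma ps_const0 : ps_const 0 = (0 : T4).
Proof. by apply: funext4 => i j k l; rewrite /ps_const; case: ifP. Qed.

Lemma ps_const1 : ps_const 1 = (1 : T4).
Proof.
apply: funext4 => i j k l; rewrite /ps_const.
case: i => [|i]; case: j => [|j]; case: k => [|k]; case: l => [|l];
  rewrite fs_oneE /= ?fs_oneE ?fs_zeroE /= ?fs_oneE ?fs_zeroE /= ?fs_oneE ?fs_zeroE /=.
all: by [].
Qed.

Lemma ps_constD a b : ps_const (a + b) = (ps_const a : T4) + ps_const b.
Proof.
apply: funext4 => i j k l; change (ps_const (a + b) i j k l = ps_const a i j k l + ps_const b i j k l).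
by rewrite /ps_const; case: ifP; rewrite ?addr0.
Qed.

Lemma ps_constN a : ps_const (- a) = - (ps_const a : T4).
Proof.
apply: funext4 => i j k l; change (ps_const (- a) i j k l = - ps_const a i j k l).
by rewrite /ps_const; case: ifP; rewrite ?oppr0.
Qed.

Lemma ps_constn m : ps_const (m%:R) = (m%:R : T4).
Proof.
elim: m => [|m IH]; first by rewrite ps_const0.
by rewrite -addn1 !natrD ps_constD IH ps_const1.
Qed.

Lemma ps_powE (X : ps) m : ps_pow X m = (X : T4) ^+ m.
Proof.
elim: m => [|m IH]; first by rewrite /ps_pow /= ps_const1.
by rewrite /ps_pow iterS -/(ps_pow X m) IH ps_mulE exprS.
Qed.

Lemma dzE (X : ps) : dz X = @dfs T3 (X : T4).
Proof. by apply: funext4 => i j k l; rewrite /dz /dfs !fs_natmulE mulr_natl. Qed.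
Lemma dzetaE (X : ps) : dzeta X = liftd (@dfs T2) (X : T4).
Proof. by apply: funext4 => i j k l; rewrite /dzeta /liftd /dfs !fs_natmulE mulr_natl. Qed.
Lemma dzbE (X : ps) : dzb X = liftd (liftd (@dfs T1)) (X : T4).
Proof. by apply: funext4 => i j k l; rewrite /dzb /liftd /dfs !fs_natmulE mulr_natl. Qed.
Lemma dzetabE (X : ps) : dzetab X = liftd (liftd (liftd (@dfs CC))) (X : T4).
Proof. by apply: funext4 => i j k l; rewrite /dzetab /liftd /dfs mulr_natl. Qed.

Lemma dz_der : isder (R:=T4) dz.
Proof. have -> : dz = @dfs T3 by apply: funext => X; rewrite dzE.
exact: dfs_der. Qed.
Lemma dzeta_der : isder (R:=T4) dzeta.
Proof. have -> : dzeta = liftd (@dfs T2) by apply: funext => X; rewrite dzetaE.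
exact: liftd_der (dfs_der _). Qed.
Lemma dzb_der : isder (R:=T4) dzb.
Proof. have -> : dzb = liftd (liftd (@dfs T1)) by apply: funext => X; rewrite dzbE.
exact: liftd_der (liftd_der (dfs_der _)). Qed.
Lemma dzetab_der : isder (R:=T4) dzetab.
Proof. have -> : dzetab = liftd (liftd (liftd (@dfs CC))) by apply: funext => X; rewrite dzetabE.
exact: liftd_der (liftd_der (liftd_der (dfs_der _))). Qed.

Lemma dz_const c : dz (ps_const c) = (0 : T4).
Proof. by apply: funext4 => i j k l; rewrite /dz /ps_const /= mulr0. Qed.
Lemma dzeta_const c : dzeta (ps_const c) = (0 : T4).
Proof. apply: funext4 => i j k l; rewrite /dzeta /ps_const /=.
by case: (i == 0%N); rewrite /= mulr0. Qed.
Lemma dzb_const c : dzb (ps_const c) = (0 : T4).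
Proof. apply: funext4 => i j k l; rewrite /dzb /ps_const /=.
by case: (i == 0%N); case: (j == 0%N); rewrite /= mulr0. Qed.
Lemma dzetab_const c : dzetab (ps_const c) = (0 : T4).
Proof. apply: funext4 => i j k l; rewrite /dzetab /ps_const /=.
by case: (i == 0%N); case: (j == 0%N); case: (k == 0%N); rewrite /= ?andbF mulr0. Qed.

Lemma comm_zeta_z X : dzeta (dz X) = dz (dzeta X).
Proof. by apply: funext4 => i j k l; rewrite /dz /dzeta mulrCA. Qed.
Lemma comm_zb_z X : dzb (dz X) = dz (dzb X).
Proof. by apply: funext4 => i j k l; rewrite /dz /dzb mulrCA. Qed.
Lemma comm_zb_zeta X : dzb (dzeta X) = dzeta (dzb X).
Proof. by apply: funext4 => i j k l; rewrite /dzeta /dzb mulrCA. Qed.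
Lemma comm_zetab_z X : dzetab (dz X) = dz (dzetab X).
Proof. by apply: funext4 => i j k l; rewrite /dz /dzetab mulrCA. Qed.
Lemma comm_zetab_zeta X : dzetab (dzeta X) = dzeta (dzetab X).
Proof. by apply: funext4 => i j k l; rewrite /dzeta /dzetab mulrCA. Qed.
Lemma comm_zetab_zb X : dzetab (dzb X) = dzb (dzetab X).
Proof. by apply: funext4 => i j k l; rewrite /dzb /dzetab mulrCA. Qed.

Lemma iter_comm (A : Type) (f g : A -> A) n x :
  (forall y, f (g y) = g (f y)) -> f (iter n g x) = iter n g (f x).
Proof. by move=> h; elim: n => //= n IH; rewrite h IH. Qed.

Lemma pd_z a b c d X : dz (pderiv a b c d X) = pderiv a.+1 b c d X.
Proof. by []. Qed.
Lemma pd_zeta a b c d X : dzeta (pderiv a b c d X) = pderiv a b.+1 c d X.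
Proof. by rewrite /pderiv (iter_comm _ _ comm_zeta_z). Qed.
Lemma pd_zb a b c d X : dzb (pderiv a b c d X) = pderiv a b c.+1 d X.
Proof. by rewrite /pderiv (iter_comm _ _ comm_zb_z) (iter_comm _ _ comm_zb_zeta). Qed.
Lemma pd_zetab a b c d X : dzetab (pderiv a b c d X) = pderiv a b c d.+1 X.
Proof. by rewrite /pderiv (iter_comm _ _ comm_zetab_z) (iter_comm _ _ comm_zetab_zeta)
  (iter_comm _ _ comm_zetab_zb). Qed.

Definition Hof (F : ps) : T4 := pderiv 1 0 1 0 F.
Definition hyp (F : ps) : Prop :=
  ps_add (ps_mul (pderiv 1 0 1 0 F) (pderiv 0 1 0 1 F))
         (ps_mul (ps_const (-1)) (ps_mul (pderiv 0 1 1 0 F) (pderiv 1 0 0 1 F)))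
  = ps_const 0.

Fixpoint pvars (p : dvar -> bool) (P : polyexpr) : bool :=
  match P with
  | PConst _ => true
  | PVar v => p v
  | PAdd P1 P2 => pvars p P1 && pvars p P2
  | PMul P1 P2 => pvars p P1 && pvars p P2
  end.

Lemma pvars_mono (p q : dvar -> bool) P : (forall v, p v -> q v) -> pvars p P -> pvars q P.
Proof.
move=> h; elim: P => /= [c|v|P1 IH1 P2 IH2|P1 IH1 P2 IH2].
- by [].
- exact: h.
- by move/andP=> [/IH1 -> /IH2 ->].
- by move/andP=> [/IH1 -> /IH2 ->].
Qed.

Lemma pvars_okE n P : pvars_ok n P = pvars (dvar_ok n) P.
Proof. by elim: P => //= P1 -> P2 ->. Qed.

Definition good (p : dvar -> bool) (G : ps -> T4) :=
  exists N P, pvars p P /\ forall F, hyp F -> Hof F ^+ N * G F = peval F P.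

Lemma peval_add F P Q : peval F (PAdd P Q) = (peval F P : T4) + peval F Q.
Proof. exact: ps_addE. Qed.
Lemma peval_mul F P Q : peval F (PMul P Q) = (peval F P : T4) * peval F Q.
Proof. exact: ps_mulE. Qed.
Lemma peval_var F v : peval F (PVar v) = dvar_eval F v.
Proof. by []. Qed.
Lemma evalH F : dvar_eval F (VarA 1 1) = Hof F.
Proof. by []. Qed.

Fixpoint hpow k := if k is k'.+1 then PMul (PVar (VarA 1 1)) (hpow k') else PConst 1.
Lemma peval_hpow F k : peval F (hpow k) = Hof F ^+ k.
Proof.
elim: k => [|k IH]; first by rewrite /= ps_const1.
by rewrite /hpow -/hpow peval_mul IH exprS.
Qed.
Lemma pvars_hpow (p : dvar -> bool) k : p (VarA 1 1) -> pvars p (hpow k).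
Proof. by move=> h; elim: k => //= k ->; rewrite h. Qed.

Section Good.
Variable p : dvar -> bool.
Hypothesis hp : p (VarA 1 1).

Lemma good_peval P : pvars p P -> good p (fun F => peval F P).
Proof. by move=> h; exists 0%N, P; split=> // F _; rewrite expr0 mul1r. Qed.

Lemma good_var v : p v -> good p (fun F => dvar_eval F v).
Proof. by move=> h; apply: (good_peval (P := PVar v)). Qed.

Lemma good_const c : good p (fun _ => ps_const c).
Proof. exact: (good_peval (P := PConst c)). Qed.

Lemma good_add G1 G2 : good p G1 -> good p G2 -> good p (fun F => G1 F + G2 F).
Proof.
move=> [N1 [P1 [h1 e1]]] [N2 [P2 [h2 e2]]].
exists (N1 + N2)%N, (PAdd (PMul (hpow N2) P1) (PMul (hpow N1) P2)).
split; first by rewrite /= h1 h2 !pvars_hpow.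
move=> F hF; rewrite peval_add !peval_mul !peval_hpow -e1 // -e2 // exprD; ring.
Qed.

Lemma good_mul G1 G2 : good p G1 -> good p G2 -> good p (fun F => G1 F * G2 F).
Proof.
move=> [N1 [P1 [h1 e1]]] [N2 [P2 [h2 e2]]].
exists (N1 + N2)%N, (PMul P1 P2).
split; first by rewrite /= h1 h2.
move=> F hF; rewrite peval_mul -e1 // -e2 // exprD; ring.
Qed.
End Good.

Lemma good_mono (p q : dvar -> bool) G : (forall v, p v -> q v) -> good p G -> good q G.
Proof. by move=> h [N [P [hP e]]]; exists N, P; split=> //; exact: pvars_mono hP. Qed.

Lemma good_ext p G1 G2 : (forall F, hyp F -> G1 F = G2 F) -> good p G1 -> good p G2.
Proof. by move=> h [N [P [hP e]]]; exists N, P; split=> // F hF; rewrite -h ?e. Qed.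

Lemma good_der (p q : dvar -> bool) (δ : T4 -> T4) vH :
  isder δ -> (forall c, δ (ps_const c) = 0) -> (forall F, δ (Hof F) = dvar_eval F vH) ->
  q vH -> q (VarA 1 1) -> (forall v, p v -> q v) ->
  (forall v, p v -> good q (fun F => δ (dvar_eval F v))) ->
  forall G, good p G -> good q (fun F => δ (G F)).
Proof.
move=> hd hc hH qH qA pq hv.
have hP : forall P, pvars p P -> good q (fun F => δ (peval F P)).
  elim => [c|v|P1 IH1 P2 IH2|P1 IH1 P2 IH2] /=.
  - move=> _; apply: (good_ext (G1 := fun _ => ps_const 0)).
      by move=> F _; rewrite hc ps_const0.
    exact: good_const.
  - exact: hv.
  - move/andP=> [h1 h2]; apply: (good_ext (G1 := fun F => δ (peval F P1) + δ (peval F P2))).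
      by move=> F _; rewrite ps_addE hd.1.
    exact: good_add (IH1 h1) (IH2 h2).
  - move/andP=> [h1 h2].
    apply: (good_ext (G1 := fun F => δ (peval F P1) * (peval F P2 : T4) + (peval F P1 : T4) * δ (peval F P2))).
      by move=> F _; rewrite ps_mulE hd.2.
    apply: good_add => //; apply: good_mul => //.
    + exact: IH1.
    + exact: good_peval (pvars_mono pq h2).
    + exact: good_peval (pvars_mono pq h1).
    + exact: IH2.
move=> G [N [P [hPv hE]]]; case: N hE => [|M] hE.
  apply: (good_ext (G1 := fun F => δ (peval F P))); last exact: hP.
  by move=> F hF; rewrite -hE // expr0 mul1r.
have [K [Q [hQ hQE]]] := hP P hPv.
exists (K + M + 2)%N, (PAdd (PMul (PVar (VarA 1 1)) Q)
  (PMul (PConst (- (M.+1)%:R)) (PMul (PVar vH) (PMul (hpow K) P)))).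
split; first by rewrite /= qA hQ qH pvars_hpow // (pvars_mono pq hPv).
move=> F hF.
have hD : δ (Hof F ^+ M.+1 * G F) = δ (peval F P) by rewrite hE.
rewrite hd.2 (der_exp hd) hH in hD.
rewrite peval_add !peval_mul peval_hpow !peval_var evalH.
have -> : peval F (PConst (- (M.+1)%:R)) = ps_const (- (M.+1)%:R) by [].
rewrite ps_constN ps_constn -hQE // -hD -hE //.
rewrite -mulr_natr !exprD expr2 exprS; ring.
Qed.

Definition bnd (n bm dm : nat) (v : dvar) : bool :=
  match v with
  | VarA a c => (a + c <= n)%N
  | VarB a b c => (a + b + c <= n)%N && (b <= bm)%N
  | VarC a c d => (a + c + d <= n)%N && (d <= dm)%N
  end.

Lemma bnd_mono n1 b1 d1 n2 b2 d2 v :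
  (n1 <= n2)%N -> (b1 <= b2)%N -> (d1 <= d2)%N -> bnd n1 b1 d1 v -> bnd n2 b2 d2 v.
Proof.
move=> hn hb hd; case: v => [a c|a b c|a c d] /=.
- lia.
- move/andP=> [h1 h2]; apply/andP; split; lia.
- move/andP=> [h1 h2]; apply/andP; split; lia.
Qed.

Lemma good_dz n bm dm G : (2 <= n)%N -> good (bnd n bm dm) G ->
  good (bnd n.+1 bm dm) (fun F => dz (G F)).
Proof.
move=> hn hG; apply: (good_der (vH := VarA 2 1) dz_der dz_const) hG.
- by [].
- by rewrite /=; lia.
- by rewrite /=; lia.
- by move=> v; apply: bnd_mono.
- case=> [a c|a b c|a c d] /= h.
  + by apply: (good_var (v := VarA a.+1 c)) => /=; lia.
  + case/andP: h => h1 h2.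
    by apply: (good_var (v := VarB a.+1 b c)) => /=; (try lia); apply/andP; split; lia.
  + case/andP: h => h1 h2.
    by apply: (good_var (v := VarC a.+1 c d)) => /=; (try lia); apply/andP; split; lia.
Qed.

Lemma good_dzb n bm dm G : (2 <= n)%N -> good (bnd n bm dm) G ->
  good (bnd n.+1 bm dm) (fun F => dzb (G F)).
Proof.
move=> hn hG; apply: (good_der (vH := VarA 1 2) dzb_der dzb_const) hG.
- by move=> F; rewrite /Hof pd_zb.
- by rewrite /=; lia.
- by rewrite /=; lia.
- by move=> v; apply: bnd_mono.
- case=> [a c|a b c|a c d] /= h.
  + apply: (good_ext (G1 := fun F => dvar_eval F (VarA a c.+1))).
      by move=> F _; rewrite /= pd_zb.
    by apply: (good_var (v := VarA a c.+1)) => /=; lia.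
  + case/andP: h => h1 h2.
    apply: (good_ext (G1 := fun F => dvar_eval F (VarB a b c.+1))).
      by move=> F _; rewrite /= pd_zb.
    by apply: (good_var (v := VarB a b c.+1)) => /=; (try lia); apply/andP; split; lia.
  + case/andP: h => h1 h2.
    apply: (good_ext (G1 := fun F => dvar_eval F (VarC a c.+1 d))).
      by move=> F _; rewrite /= pd_zb.
    by apply: (good_var (v := VarC a c.+1 d)) => /=; (try lia); apply/andP; split; lia.
Qed.

Lemma good_dzeta n bm dm G : (2 <= n)%N ->
  (forall a c d, (1 <= d <= dm)%N -> (a + c + d <= n)%N ->
     good (bnd (a + 1 + c + d) 1 d) (fun F => pderiv a 1 c d F)) ->
  good (bnd n bm dm) G ->
  good (bnd n.+1 bm.+1 dm) (fun F => dzeta (G F)).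
Proof.
move=> hn IH hG; apply: (good_der (vH := VarB 1 1 1) dzeta_der dzeta_const) hG.
- by move=> F; rewrite /Hof pd_zeta.
- by rewrite /=; apply/andP; split; lia.
- by rewrite /=; lia.
- by move=> v; apply: bnd_mono.
- case=> [a c|a b c|a c d] /= h.
  + apply: (good_ext (G1 := fun F => dvar_eval F (VarB a 1 c))).
      by move=> F _; rewrite /= pd_zeta.
    by apply: (good_var (v := VarB a 1 c)) => /=; (try lia); apply/andP; split; lia.
  + case/andP: h => h1 h2.
    apply: (good_ext (G1 := fun F => dvar_eval F (VarB a b.+1 c))).
      by move=> F _; rewrite /= pd_zeta.
    by apply: (good_var (v := VarB a b.+1 c)) => /=; (try lia); apply/andP; split; lia.
  + case/andP: h => h1 h2.
    case: d h1 h2 => [|d] h1 h2.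
      apply: (good_ext (G1 := fun F => dvar_eval F (VarB a 1 c))).
        by move=> F _; rewrite /= pd_zeta.
      by apply: (good_var (v := VarB a 1 c)) => /=; (try lia); apply/andP; split; lia.
    apply: (good_ext (G1 := fun F => pderiv a 1 c d.+1 F)).
      by move=> F _; rewrite /= pd_zeta.
    apply: good_mono (IH a c d.+1 _ _); last by lia.
      by move=> v; apply: bnd_mono; lia.
    by apply/andP; split; lia.
Qed.

Lemma good_dzetab n bm dm G : (2 <= n)%N ->
  (forall a b c, (1 <= b <= bm)%N -> (a + b + c <= n)%N ->
     good (bnd (a + b + c + 1) b 1) (fun F => pderiv a b c 1 F)) ->
  good (bnd n bm dm) G ->
  good (bnd n.+1 bm dm.+1) (fun F => dzetab (G F)).
Proof.
move=> hn IH hG; apply: (good_der (vH := VarC 1 1 1) dzetab_der dzetab_const) hG.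
- by move=> F; rewrite /Hof pd_zetab.
- by rewrite /=; apply/andP; split; lia.
- by rewrite /=; lia.
- by move=> v; apply: bnd_mono.
- case=> [a c|a b c|a c d] /= h.
  + apply: (good_ext (G1 := fun F => dvar_eval F (VarC a c 1))).
      by move=> F _; rewrite /= pd_zetab.
    by apply: (good_var (v := VarC a c 1)) => /=; (try lia); apply/andP; split; lia.
  + case/andP: h => h1 h2.
    case: b h1 h2 => [|b] h1 h2.
      apply: (good_ext (G1 := fun F => dvar_eval F (VarC a c 1))).
        by move=> F _; rewrite /= pd_zetab.
      by apply: (good_var (v := VarC a c 1)) => /=; (try lia); apply/andP; split; lia.
    apply: (good_ext (G1 := fun F => pderiv a b.+1 c 1 F)).
      by move=> F _; rewrite /= pd_zetab.
    apply: good_mono (IH a b.+1 c _ _); last by lia.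
      by move=> v; apply: bnd_mono; lia.
    by apply/andP; split; lia.
  + case/andP: h => h1 h2.
    apply: (good_ext (G1 := fun F => dvar_eval F (VarC a c d.+1))).
      by move=> F _; rewrite /= pd_zetab.
    by apply: (good_var (v := VarC a c d.+1)) => /=; (try lia); apply/andP; split; lia.
Qed.

Lemma base : good (bnd 2 1 1) (fun F => pderiv 0 1 0 1 F).
Proof.
exists 1%N, (PMul (PVar (VarB 0 1 1)) (PVar (VarC 1 0 1))); split; first by [].
move=> F hF; rewrite expr1 peval_mul !peval_var.
move: hF; rewrite /hyp ps_addE !ps_mulE ps_constN ps_const1 ps_const0 mulN1r => h.
by apply: subr0_eq; exact: h.
Qed.

Lemma lift_c b d c : (2 <= b + d)%N -> good (bnd (b + d) b d) (fun F => pderiv 0 b 0 d F) ->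
  good (bnd (b + c + d) b d) (fun F => pderiv 0 b c d F).
Proof.
move=> h2 h; elim: c => [|c IH]; first by rewrite addn0.
apply: (good_ext (G1 := fun F => dzb (pderiv 0 b c d F))); first by move=> F _; rewrite pd_zb.
apply: good_mono (good_dzb _ IH); last by lia.
by move=> v; apply: bnd_mono; lia.
Qed.

Lemma lift_a b c d a : (2 <= b + c + d)%N ->
  good (bnd (b + c + d) b d) (fun F => pderiv 0 b c d F) ->
  good (bnd (a + b + c + d) b d) (fun F => pderiv a b c d F).
Proof.
move=> h2 h; elim: a => [|a IH]; first by rewrite add0n.
apply: (good_ext (G1 := fun F => dz (pderiv a b c d F))); first by move=> F _; rewrite pd_z.
apply: good_mono (good_dz _ IH); last by lia.
by move=> v; apply: bnd_mono; lia.
Qed.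

Lemma mainS s : forall a b c d, (1 <= b)%N -> (1 <= d)%N -> (b + d <= s)%N ->
  good (bnd (a + b + c + d) b d) (fun F => pderiv a b c d F).
Proof.
elim: s => [|s IH] a b c d hb hd hs; first by lia.
case: b hb hs => [|b] // hb hs.
case: b hb hs => [|b] hb hs.
  case: d hd hs => [|d] // hd hs.
  case: d hd hs => [|d] hd hs.
    apply: lift_a; first by lia.
    apply: lift_c; first by lia.
    exact: base.
  apply: (good_ext (G1 := fun F => dzetab (pderiv a 1 c d.+1 F))).
    by move=> F _; rewrite pd_zetab.
  have := @good_dzetab (a + 1 + c + d.+1) 1 d.+1 (fun F => pderiv a 1 c d.+1 F).
  move=> /(_ _ _ (IH a 1 c d.+1 _ _ _)) h.
  apply: good_mono (h _ _ _ _ _); first by move=> v; apply: bnd_mono; lia.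
  - by lia.
  - move=> a0 b0 c0 hb0 _; apply: IH; lia.
  - by [].
  - by [].
  - by lia.
have := @good_dzeta (a + b.+1 + c + d) b.+1 d (fun F => pderiv a b.+1 c d F).
move=> /(_ _ _ (IH a b.+1 c d _ _ _)) h.
apply: (good_ext (G1 := fun F => dzeta (pderiv a b.+1 c d F))).
  by move=> F _; rewrite pd_zeta.
apply: good_mono (h _ _ _ _ _); first by move=> v; apply: bnd_mono; lia.
- by lia.
- move=> a0 c0 d0 hd0 _; apply: IH; lia.
- by [].
- by [].
- by lia.
Qed.


Unset Implicit Arguments.

Theorem lemma7p1 :
  forall a b c d : nat, (1 <= b)%N -> (1 <= d)%N ->
  let n := (a + b + c + d)%N in
  exists (N : nat) (P : polyexpr),
    (1 <= N)%N /\ pvars_ok n P /\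
    forall F : ps,
      ps_convergent F ->
      ps_at0 (pderiv 1 0 1 0 F) != 0 ->
      ps_add (ps_mul (pderiv 1 0 1 0 F) (pderiv 0 1 0 1 F))
             (ps_mul (ps_const (-1)) (ps_mul (pderiv 0 1 1 0 F) (pderiv 1 0 0 1 F)))
        = ps_const 0 ->
      ps_mul (ps_pow (pderiv 1 0 1 0 F) N) (pderiv a b c d F) = peval F P.
Proof.
move=> a b c d hb hd n.
have [N [P [hP hE]]] := mainS a c hb hd (leqnn (b + d)).
exists N.+1, (PMul (PVar (VarA 1 1)) P); split; first by [].
split.
  rewrite pvars_okE /= /n; apply/andP; split; first by lia.
  by apply: pvars_mono hP => v; case: v => [a' c'|a' b' c'|a' c' d'] //= /andP [].
move=> F _ _ hF.
by rewrite ps_mulE ps_powE peval_mul exprS -mulrA hE.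
Qed.
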